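(* Let $\mathcal{W}$ be a weakly exact structure on an additive category $\mathcal{A}$. Let $I$ be the class of admissible monics of $\mathcal{W}$ and $\mathcal{D}$ the class of admissible epics of $\mathcal{W}$. Then $I$ is a right weakly exact structure and $\mathcal{D}$ is a left weakly exact structure on $\mathcal{A}$. Consequently every weakly exact structure arises from a pair (left weakly exact structure, right weakly exact structure) by taking all kernel-cokernel pairs $(i,d)$ with $i\in I$, $d\in\mathcal{D}$.
   Context: Let $\mathcal{A}$ be an additive category. A kernel-cokernel pair (short exact sequence) is a pair of composable morphisms $A\xrightarrow{i}B\xrightarrow{d}C$ with $i$ a kernel of $d$ and $d$ a cokernel of $i$. A weakly exact structure on $\mathcal{A}$ is a class $\mathcal{W}$ of kernel-cokernel pairs, closed under isomorphisms of sequences and under finite direct sums of sequences, such that, calling $i$ an admissible monic (resp. $d$ an admissible epic) if $(i,d)\in\mathcal{W}$ for some $d$ (resp. some $i$): (E0) $1_A$ is an admissible monic for every object $A$; (E0)$^{op}$ $1_A$ is an admissible epic for every object $A$; (E2) for every admissible monic $i:A\to B$ and every morphism $t:A\to C$ the pushout of $i$ along $t$ exists and the resulting morphism $C\to S$ is an admissible monic; (E2)$^{op}$ for every admissible epic $h:A\to C$ and every morphism $t:B\to C$ the pullback of $h$ along $t$ exists and the resulting morphism $P\to B$ is an admissible epic. A right weakly exact structure on $\mathcal{A}$ is a class $I$ of morphisms that are kernels, closed under isomorphisms (of arrows), such that: (Id) for every object $X$, $1_X\in I$ and $0\to X$ is in $I$; (P) for every $f:X\to Y$ in $I$ and every morphism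 $h:X\to X'$ the pushout of $f$ along $h$ exists and the resulting morphism $f':X'\to Y'$ lies in $I$; (Q) if $A\xrightarrow{a}B\xrightarrow{b}C$ with $ba\in I$ and $a$ has a cokernel, then $a\in I$; (S) $I$ is closed under direct sums of morphisms. A left weakly exact structure is a class $\mathcal{D}$ of morphisms that are cokernels, closed under isomorphisms, satisfying the dual conditions: (Id$^{op}$) $1_X\in\mathcal{D}$ and $X\to 0$ is in $\mathcal{D}$ for all $X$; (P$^{op}$) pullbacks of morphisms in $\mathcal{D}$ along arbitrary morphisms exist and yield morphisms in $\mathcal{D}$; (Q$^{op}$) if $ba\in\mathcal{D}$ and $b$ has a kernel then $b\in\mathcal{D}$; (S$^{op}$) $\mathcal{D}$ is closed under direct sums of morphisms. *)

(* Defs.v *)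
Set Implicit Arguments.
Unset Strict Implicit.

Reserved Notation "g ∘ f" (at level 40, left associativity).

Record AdditiveCategory := {
  Obj :> Type;
  Hom : Obj -> Obj -> Type;
  idm : forall A, Hom A A;
  comp : forall A B C, Hom B C -> Hom A B -> Hom A C;
  comp_assoc : forall A B C D (h : Hom C D) (g : Hom B C) (f : Hom A B),
      comp h (comp g f) = comp (comp h g) f;
  comp_id_l : forall A B (f : Hom A B), comp (idm B) f = f;
  comp_id_r : forall A B (f : Hom A B), comp f (idm A) = f;
  hadd : forall A B, Hom A B -> Hom A B -> Hom A B;
  hzero : forall A B, Hom A B;
  hneg : forall A B, Hom A B -> Hom A B;
  hadd_assoc : forall A B (f g h : Hom A B), hadd f (hadd g h) = hadd (hadd f g) h;
  hadd_comm : forall A B (f g : Hom A B), hadd f g = hadd g f;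
  hadd_0 : forall A B (f : Hom A B), hadd f (hzero A B) = f;
  hadd_neg : forall A B (f : Hom A B), hadd f (hneg f) = hzero A B;
  comp_add_l : forall A B C (g g' : Hom B C) (f : Hom A B),
      comp (hadd g g') f = hadd (comp g f) (comp g' f);
  comp_add_r : forall A B C (g : Hom B C) (f f' : Hom A B),
      comp g (hadd f f') = hadd (comp g f) (comp g f');
  zobj : Obj;
  zobj_id : idm zobj = hzero zobj zobj;
  bsum : Obj -> Obj -> Obj;
  bin1 : forall A B, Hom A (bsum A B);
  bin2 : forall A B, Hom B (bsum A B);
  bpr1 : forall A B, Hom (bsum A B) A;
  bpr2 : forall A B, Hom (bsum A B) B;
  bpr1_in1 : forall A B, comp (bpr1 A B) (bin1 A B) = idm A;
  bpr2_in2 : forall A B, comp (bpr2 A B) (bin2 A B) = idm B;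
  bpr1_in2 : forall A B, comp (bpr1 A B) (bin2 A B) = hzero B A;
  bpr2_in1 : forall A B, comp (bpr2 A B) (bin1 A B) = hzero A B;
  bsum_id : forall A B,
      hadd (comp (bin1 A B) (bpr1 A B)) (comp (bin2 A B) (bpr2 A B))
      = idm (bsum A B)
}.

Arguments Hom {a} _ _.
Arguments idm {a} _.
Arguments comp {a A B C} _ _.
Arguments hzero {a} _ _.
Arguments hadd {a A B} _ _.
Arguments zobj {a}.
Arguments bsum {a} _ _.
Arguments bin1 {a} _ _.
Arguments bin2 {a} _ _.
Arguments bpr1 {a} _ _.
Arguments bpr2 {a} _ _.

Notation "g ∘ f" := (comp g f).

Section Defs.
Variable C : AdditiveCategory.

Definition from_zero (X : C) : Hom zobj X := hzero zobj X.
Definition to_zero (X : C) : Hom X zobj := hzero X zobj.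

Definition is_iso {A B : C} (f : Hom A B) : Prop :=
  exists g : Hom B A, g ∘ f = idm A /\ f ∘ g = idm B.

Definition hsum {A B A' B' : C} (f : Hom A B) (g : Hom A' B')
  : Hom (bsum A A') (bsum B B') :=
  hadd (bin1 B B' ∘ f ∘ bpr1 A A') (bin2 B B' ∘ g ∘ bpr2 A A').

Definition is_kernel_of {A B D : C} (i : Hom A B) (d : Hom B D) : Prop :=
  d ∘ i = hzero A D /\
  forall (X : C) (f : Hom X B), d ∘ f = hzero X D ->
    exists g : Hom X A, i ∘ g = f /\ forall g' : Hom X A, i ∘ g' = f -> g' = g.

Definition is_cokernel_of {A B D : C} (i : Hom A B) (d : Hom B D) : Prop :=
  d ∘ i = hzero A D /\
  forall (X : C) (f : Hom B X), f ∘ i = hzero A X ->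
    exists g : Hom D X, g ∘ d = f /\ forall g' : Hom D X, g' ∘ d = f -> g' = g.

Definition is_kernel {A B : C} (i : Hom A B) : Prop :=
  exists (D : C) (d : Hom B D), is_kernel_of i d.

Definition is_cokernel {B D : C} (d : Hom B D) : Prop :=
  exists (A : C) (i : Hom A B), is_cokernel_of i d.

Definition has_cokernel {A B : C} (a : Hom A B) : Prop :=
  exists (D : C) (d : Hom B D), is_cokernel_of a d.

Definition has_kernel {B D : C} (b : Hom B D) : Prop :=
  exists (A : C) (i : Hom A B), is_kernel_of i b.

Definition kc_pair {A B D : C} (i : Hom A B) (d : Hom B D) : Prop :=
  is_kernel_of i d /\ is_cokernel_of i d.

(** Pushout square:   X --f--> Y
                      |h       |h'
                      X' -f'-> Y'     *)
Definition is_pushout {X Y X' Y' : C} (f : Hom X Y) (h : Hom X X')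
    (f' : Hom X' Y') (h' : Hom Y Y') : Prop :=
  f' ∘ h = h' ∘ f /\
  forall (Z : C) (u : Hom X' Z) (v : Hom Y Z), u ∘ h = v ∘ f ->
    exists w : Hom Y' Z, (w ∘ f' = u /\ w ∘ h' = v) /\
      forall w' : Hom Y' Z, w' ∘ f' = u /\ w' ∘ h' = v -> w' = w.

(** Pullback square:  P --h'--> A
                      |t'       |h
                      B  --t--> D     *)
Definition is_pullback {P A B D : C} (h : Hom A D) (t : Hom B D)
    (h' : Hom P B) (t' : Hom P A) : Prop :=
  h ∘ t' = t ∘ h' /\
  forall (Z : C) (u : Hom Z A) (v : Hom Z B), h ∘ u = t ∘ v ->
    exists w : Hom Z P, (t' ∘ w = u /\ h' ∘ w = v) /\
      forall w' : Hom Z P, t' ∘ w' = u /\ h' ∘ w' = v -> w' = w.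

Definition MorClass := forall A B : C, Hom A B -> Prop.
Definition SeqClass := forall A B D : C, Hom A B -> Hom B D -> Prop.

Definition pushout_stable (P : MorClass) : Prop :=
  forall (X Y X' : C) (f : Hom X Y) (h : Hom X X'), P _ _ f ->
    (exists (Y' : C) (f' : Hom X' Y') (h' : Hom Y Y'), is_pushout f h f' h') /\
    (forall (Y' : C) (f' : Hom X' Y') (h' : Hom Y Y'),
        is_pushout f h f' h' -> P _ _ f').

Definition pullback_stable (P : MorClass) : Prop :=
  forall (A D B : C) (h : Hom A D) (t : Hom B D), P _ _ h ->
    (exists (Q : C) (h' : Hom Q B) (t' : Hom Q A), is_pullback h t h' t') /\
    (forall (Q : C) (h' : Hom Q B) (t' : Hom Q A),
        is_pullback h t h' t' -> P _ _ h').

Definition adm_monic (W : SeqClass) : MorClass :=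
  fun A B i => exists (D : C) (d : Hom B D), W _ _ _ i d.

Definition adm_epic (W : SeqClass) : MorClass :=
  fun B D d => exists (A : C) (i : Hom A B), W _ _ _ i d.

Definition seq_iso_closed (W : SeqClass) : Prop :=
  forall (A B D A' B' D' : C) (i : Hom A B) (d : Hom B D)
         (i' : Hom A' B') (d' : Hom B' D')
         (a : Hom A A') (b : Hom B B') (c : Hom D D'),
    W _ _ _ i d -> is_iso a -> is_iso b -> is_iso c ->
    i' ∘ a = b ∘ i -> d' ∘ b = c ∘ d -> W _ _ _ i' d'.

Definition seq_sum_closed (W : SeqClass) : Prop :=
  forall (A B D A' B' D' : C) (i : Hom A B) (d : Hom B D)
         (i' : Hom A' B') (d' : Hom B' D'),
    W _ _ _ i d -> W _ _ _ i' d' -> W _ _ _ (hsum i i') (hsum d d').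

Definition weakly_exact (W : SeqClass) : Prop :=
  (forall (A B D : C) (i : Hom A B) (d : Hom B D), W _ _ _ i d -> kc_pair i d) /\
  seq_iso_closed W /\
  seq_sum_closed W /\
  (forall A : C, adm_monic W (idm A)) /\
  (forall A : C, adm_epic W (idm A)) /\
  pushout_stable (adm_monic W) /\
  pullback_stable (adm_epic W).

Definition mor_iso_closed (P : MorClass) : Prop :=
  forall (X Y X' Y' : C) (f : Hom X Y) (f' : Hom X' Y')
         (a : Hom X X') (b : Hom Y Y'),
    P _ _ f -> is_iso a -> is_iso b -> f' ∘ a = b ∘ f -> P _ _ f'.

Definition mor_sum_closed (P : MorClass) : Prop :=
  forall (A B A' B' : C) (f : Hom A B) (g : Hom A' B'),
    P _ _ f -> P _ _ g -> P _ _ (hsum f g).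

Definition right_weakly_exact (I : MorClass) : Prop :=
  (forall (A B : C) (f : Hom A B), I _ _ f -> is_kernel f) /\
  mor_iso_closed I /\
  (forall X : C, I _ _ (idm X) /\ I _ _ (from_zero X)) /\
  pushout_stable I /\
  (forall (A B D : C) (a : Hom A B) (b : Hom B D),
               I _ _ (b ∘ a) -> has_cokernel a -> I _ _ a) /\
  mor_sum_closed I.

Definition left_weakly_exact (Dc : MorClass) : Prop :=
  (forall (A B : C) (f : Hom A B), Dc _ _ f -> is_cokernel f) /\
  mor_iso_closed Dc /\
  (forall X : C, Dc _ _ (idm X) /\ Dc _ _ (to_zero X)) /\
  pullback_stable Dc /\
  (forall (A B D : C) (a : Hom A B) (b : Hom B D),
               Dc _ _ (b ∘ a) -> has_kernel b -> Dc _ _ b) /\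
  mor_sum_closed Dc.

End Defs.

(* Main.v *)
Require Import Defs.

Section Alg.
Context {C : AdditiveCategory}.
Implicit Types A B X Y Z : C.

Lemma hadd_0l {A B} (f : Hom A B) : hadd (hzero A B) f = f.
Proof. rewrite hadd_comm; apply hadd_0. Qed.

Lemma hadd_negl {A B} (f : Hom A B) : hadd (hneg f) f = hzero A B.
Proof. rewrite hadd_comm; apply hadd_neg. Qed.

Lemma hadd_cancel {A B} (x y z : Hom A B) : hadd x y = hadd x z -> y = z.
Proof.
  intro H. rewrite <- (hadd_0l y), <- (hadd_0l z), <- (hadd_negl x),
    <- !hadd_assoc, H. reflexivity.
Qed.

Lemma hneg_unique {A B} (x y : Hom A B) : hadd x y = hzero A B -> y = hneg x.
Proof. intro H. apply (hadd_cancel x). rewrite H, hadd_neg. reflexivity. Qed.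

Lemma hneg_neg {A B} (x : Hom A B) : hneg (hneg x) = x.
Proof. symmetry. apply hneg_unique. apply hadd_negl. Qed.

Lemma hsub_eq {A B} (x y : Hom A B) : hadd x (hneg y) = hzero A B -> x = y.
Proof. intro H. apply hneg_unique in H. rewrite <- (hneg_neg x), <- H, hneg_neg. reflexivity. Qed.

Lemma hneg_zero {A B} : hneg (hzero A B) = hzero A B.
Proof. symmetry. apply hneg_unique. apply hadd_0. Qed.

Lemma comp_zero_l {A B D} (f : Hom A B) : hzero B D ∘ f = hzero A D.
Proof.
  apply (hadd_cancel (hzero B D ∘ f)). rewrite hadd_0, <- comp_add_l, hadd_0. reflexivity.
Qed.

Lemma comp_zero_r {A B D} (f : Hom B D) : f ∘ hzero A B = hzero A D.
Proof.
  apply (hadd_cancel (f ∘ hzero A B)). rewrite hadd_0, <- comp_add_r, hadd_0. reflexivity.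
Qed.

Lemma comp_neg_l {A B D} (g : Hom B D) (f : Hom A B) : hneg g ∘ f = hneg (g ∘ f).
Proof. apply hneg_unique. rewrite <- comp_add_l, hadd_neg. apply comp_zero_l. Qed.

Lemma comp_neg_r {A B D} (g : Hom B D) (f : Hom A B) : g ∘ hneg f = hneg (g ∘ f).
Proof. apply hneg_unique. rewrite <- comp_add_r, hadd_neg. apply comp_zero_r. Qed.

Lemma hadd_sub_cancel {A B} (x y : Hom A B) : hadd (hadd x (hneg y)) y = x.
Proof. rewrite <- hadd_assoc, hadd_negl, hadd_0. reflexivity. Qed.

Lemma hadd_cancel_r {A B} (x y z : Hom A B) : hadd y x = hadd z x -> y = z.
Proof. rewrite (hadd_comm y), (hadd_comm z). apply hadd_cancel. Qed.

Definition tup {X A B} (f : Hom X A) (g : Hom X B) : Hom X (bsum A B) :=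
  hadd (bin1 A B ∘ f) (bin2 A B ∘ g).
Definition cotup {A B X} (f : Hom A X) (g : Hom B X) : Hom (bsum A B) X :=
  hadd (f ∘ bpr1 A B) (g ∘ bpr2 A B).

Lemma pr1_tup {X A B} (f : Hom X A) (g : Hom X B) : bpr1 A B ∘ tup f g = f.
Proof.
  unfold tup. rewrite comp_add_r, !comp_assoc, bpr1_in1, bpr1_in2, comp_id_l, comp_zero_l.
  apply hadd_0.
Qed.
Lemma pr2_tup {X A B} (f : Hom X A) (g : Hom X B) : bpr2 A B ∘ tup f g = g.
Proof.
  unfold tup. rewrite comp_add_r, !comp_assoc, bpr2_in2, bpr2_in1, comp_id_l, comp_zero_l.
  apply hadd_0l.
Qed.
Lemma cotup_in1 {A B X} (f : Hom A X) (g : Hom B X) : cotup f g ∘ bin1 A B = f.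
Proof.
  unfold cotup. rewrite comp_add_l, <- !comp_assoc, bpr1_in1, bpr2_in1, comp_id_r, comp_zero_r.
  apply hadd_0.
Qed.
Lemma cotup_in2 {A B X} (f : Hom A X) (g : Hom B X) : cotup f g ∘ bin2 A B = g.
Proof.
  unfold cotup. rewrite comp_add_l, <- !comp_assoc, bpr2_in2, bpr1_in2, comp_id_r, comp_zero_r.
  apply hadd_0l.
Qed.

Lemma tup_eta {X A B} (f : Hom X (bsum A B)) : f = tup (bpr1 A B ∘ f) (bpr2 A B ∘ f).
Proof.
  unfold tup. rewrite !comp_assoc, <- comp_add_l, bsum_id, comp_id_l. reflexivity.
Qed.
Lemma cotup_eta {A B X} (f : Hom (bsum A B) X) : f = cotup (f ∘ bin1 A B) (f ∘ bin2 A B).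
Proof.
  unfold cotup. rewrite <- !comp_assoc, <- comp_add_r, bsum_id, comp_id_r. reflexivity.
Qed.

Lemma bsum_ext {X A B} (f g : Hom X (bsum A B)) :
  bpr1 A B ∘ f = bpr1 A B ∘ g -> bpr2 A B ∘ f = bpr2 A B ∘ g -> f = g.
Proof. intros H1 H2. rewrite (tup_eta f), (tup_eta g), H1, H2. reflexivity. Qed.
Lemma bsum_ext_l {A B X} (f g : Hom (bsum A B) X) :
  f ∘ bin1 A B = g ∘ bin1 A B -> f ∘ bin2 A B = g ∘ bin2 A B -> f = g.
Proof. intros H1 H2. rewrite (cotup_eta f), (cotup_eta g), H1, H2. reflexivity. Qed.

Lemma cotup_tup {X A B Y} (f : Hom A Y) (g : Hom B Y) (u : Hom X A) (v : Hom X B) :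
  cotup f g ∘ tup u v = hadd (f ∘ u) (g ∘ v).
Proof.
  unfold cotup. rewrite comp_add_l, <- !comp_assoc, pr1_tup, pr2_tup. reflexivity.
Qed.

Lemma tup_comp {X Y A B} (f : Hom Y A) (g : Hom Y B) (h : Hom X Y) :
  tup f g ∘ h = tup (f ∘ h) (g ∘ h).
Proof.
  apply bsum_ext; rewrite comp_assoc; [rewrite !pr1_tup | rewrite !pr2_tup]; reflexivity.
Qed.

Lemma comp_cotup {A B X Y} (f : Hom A X) (g : Hom B X) (h : Hom X Y) :
  h ∘ cotup f g = cotup (h ∘ f) (h ∘ g).
Proof.
  apply bsum_ext_l; rewrite <- comp_assoc; [rewrite !cotup_in1 | rewrite !cotup_in2]; reflexivity.
Qed.

Lemma tup_zero {X A B} : tup (hzero X A) (hzero X B) = hzero X (bsum A B).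
Proof. unfold tup. rewrite !comp_zero_r. apply hadd_0. Qed.

Lemma kernel_monic {A B D} (i : Hom A B) (d : Hom B D) {X} (x y : Hom X A) :
  is_kernel_of i d -> i ∘ x = i ∘ y -> x = y.
Proof.
  intros [H0 Hk] E.
  assert (Z : d ∘ (i ∘ x) = hzero X D) by (rewrite comp_assoc, H0; apply comp_zero_l).
  destruct (Hk X (i ∘ x) Z) as [g [_ Hu]].
  rewrite (Hu x eq_refl), (Hu y (eq_sym E)). reflexivity.
Qed.

Lemma cokernel_epic {A B D} (i : Hom A B) (d : Hom B D) {X} (x y : Hom D X) :
  is_cokernel_of i d -> x ∘ d = y ∘ d -> x = y.
Proof.
  intros [H0 Hk] E.
  assert (Z : (x ∘ d) ∘ i = hzero A X) by (rewrite <- comp_assoc, H0; apply comp_zero_r).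
  destruct (Hk X (x ∘ d) Z) as [g [_ Hu]].
  rewrite (Hu x eq_refl), (Hu y (eq_sym E)). reflexivity.
Qed.

Lemma iso_id {A : C} : is_iso (idm A).
Proof. exists (idm A). rewrite comp_id_l. split; reflexivity. Qed.

End Alg.


Arguments kernel_monic {C A B D i d X x y} _ _.
Arguments cokernel_epic {C A B D i d X x y} _ _.

Section Right.
Variable C : AdditiveCategory.
Variable W : SeqClass C.
Hypothesis we : weakly_exact W.

Lemma W_kc {A B D} {i : Hom A B} {d : Hom B D} : W _ _ _ i d -> kc_pair i d.
Proof. destruct we as [H _]. apply H. Qed.

Lemma K1 {A A' B D : C} {k : Hom A B} {i : Hom A' B} {d : Hom B D} :
  W _ _ _ k d -> is_kernel_of i d -> W _ _ _ i d.
Proof.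
  intros Wk Ki. destruct (W_kc Wk) as [Kk _].
  destruct we as [_ [Hiso _]].
  pose proof Ki as [Ki0 Kiu]. pose proof Kk as [Kk0 Kku].
  destruct (Kiu _ k Kk0) as [psi [Hpsi _]].
  destruct (Kku _ i Ki0) as [phi [Hphi _]].
  apply (Hiso _ _ _ _ _ _ k d i d psi (idm B) (idm D) Wk).
  - exists phi. split.
    + apply (kernel_monic Kk). rewrite comp_assoc, Hphi, Hpsi, comp_id_r. reflexivity.
    + apply (kernel_monic Ki). rewrite comp_assoc, Hpsi, Hphi, comp_id_r. reflexivity.
  - apply iso_id.
  - apply iso_id.
  - rewrite Hpsi, comp_id_l. reflexivity.
  - rewrite comp_id_l, comp_id_r. reflexivity.
Qed.

Lemma K2 {A B D D' : C} {i : Hom A B} {e : Hom B D} {d : Hom B D'} :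
  W _ _ _ i e -> is_cokernel_of i d -> W _ _ _ i d.
Proof.
  intros We Cd. destruct (W_kc We) as [_ Ce].
  destruct we as [_ [Hiso _]].
  pose proof Cd as [Cd0 Cdu]. pose proof Ce as [Ce0 Ceu].
  destruct (Ceu _ d Cd0) as [psi [Hpsi _]].
  destruct (Cdu _ e Ce0) as [phi [Hphi _]].
  apply (Hiso _ _ _ _ _ _ i e i d (idm A) (idm B) psi We).
  - apply iso_id.
  - apply iso_id.
  - exists phi. split.
    + apply (cokernel_epic Ce). rewrite <- comp_assoc, Hpsi, Hphi, comp_id_l. reflexivity.
    + apply (cokernel_epic Cd). rewrite <- comp_assoc, Hphi, Hpsi, comp_id_l. reflexivity.
  - rewrite comp_id_l, comp_id_r. reflexivity.
  - rewrite Hpsi, comp_id_r. reflexivity.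
Qed.


Lemma in1_tup {X A B : C} (f : Hom X A) : bin1 A B ∘ f = tup f (hzero X B).
Proof.
  apply bsum_ext; rewrite ?pr1_tup, ?pr2_tup, comp_assoc;
   [rewrite bpr1_in1, comp_id_l | rewrite bpr2_in1, comp_zero_l]; reflexivity.
Qed.

Lemma Q_prop {A B D : C} (a : Hom A B) (b : Hom B D) :
  adm_monic W (b ∘ a) -> has_cokernel a -> adm_monic W a.
Proof.
  intros [E [e We]] [Q [c Cc]].
  pose proof we as [Hkc [Hiso [Hsum [E0 [E0op [E2 E2op]]]]]].
  set (x := b ∘ a) in *.
  destruct (W_kc We) as [Kx Ce].
  destruct (E2 _ _ _ x a (ex_intro _ E (ex_intro _ e We))) as [[P [m [n Po]]] Hst].
  pose proof (Hst P m n Po) as Madm.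
  destruct Po as [Pc Pu].
  pose proof Ce as [Ce0 Ceu].
  destruct (Pu E (hzero B E) e) as [q [[Hqm Hqn] Hqu]].
  { rewrite comp_zero_l. symmetry. exact Ce0. }
  assert (Cq : is_cokernel_of m q).
  { split; [exact Hqm|].
    intros X g Hg.
    assert (Hgx : (g ∘ n) ∘ x = hzero A X).
    { rewrite <- comp_assoc, <- Pc, comp_assoc, Hg. apply comp_zero_l. }
    destruct (Ceu X (g ∘ n) Hgx) as [k [Hk Hku]].
    destruct (Pu X (hzero B X) (g ∘ n)) as [w [_ Hwu]].
    { rewrite comp_zero_l, <- comp_assoc, <- Pc, comp_assoc, Hg. symmetry; apply comp_zero_l. }
    exists k. split.
    - rewrite (Hwu (k ∘ q)), (Hwu g); try reflexivity.
      + split; [exact Hg | reflexivity].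
      + rewrite <- !comp_assoc, Hqm, Hqn, comp_zero_r. split; [reflexivity | exact Hk].
    - intros k' Hk'. apply Hku. rewrite <- Hk', <- comp_assoc, Hqn. reflexivity. }
  destruct Madm as [E1 [q1 Wq1]].
  pose proof (K2 Wq1 Cq) as Wmq.
  destruct (W_kc Wmq) as [Km _].
  pose proof Km as [Km0 Kmu].
  (* [m,n] is admissible epic *)
  assert (Pb : is_pullback e q (cotup m n) (bpr2 B D)).
  { split.
    - rewrite comp_cotup, Hqm, Hqn. unfold cotup. rewrite comp_zero_l, hadd_0l. reflexivity.
    - intros Z u v Huv.
      destruct (Kmu Z (hadd v (hneg (n ∘ u)))) as [y [Hy Hyu]].
      { rewrite comp_add_r, comp_neg_r, comp_assoc, Hqn, <- Huv. apply hadd_neg. }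
      exists (tup y u). split; [split|].
      + apply pr2_tup.
      + rewrite cotup_tup, Hy. apply hadd_sub_cancel.
      + intros w' [H2 H1]. apply bsum_ext.
        * rewrite pr1_tup. apply Hyu.
          rewrite (tup_eta w'), cotup_tup, H2 in H1.
          rewrite <- H1, <- hadd_assoc, hadd_neg, hadd_0. reflexivity.
        * rewrite pr2_tup. exact H2. }
  destruct (E2op _ _ _ e q (ex_intro _ A (ex_intro _ x We))) as [_ Hpb].
  destruct (Hpb _ _ _ Pb) as [K [k Wk]].
  assert (Kj : is_kernel_of (tup (hneg a) x) (cotup m n)).
  { split.
    - rewrite cotup_tup, comp_neg_r, Pc. apply hadd_negl.
    - intros X f Hf.
      assert (He : e ∘ (bpr2 B D ∘ f) = hzero X E).
      { rewrite comp_assoc, (proj1 Pb), <- comp_assoc, Hf. apply comp_zero_r. }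
      destruct Kx as [Kx0 Kxu].
      destruct (Kxu X _ He) as [g [Hg Hgu]].
      exists g. split.
      + rewrite tup_comp. apply bsum_ext; rewrite ?pr1_tup, ?pr2_tup.
        * rewrite (tup_eta f), cotup_tup, <- Hg, (comp_assoc n x g), <- Pc, <- (comp_assoc m a g) in Hf.
          rewrite <- comp_add_r in Hf.
          assert (H0 : hadd (bpr1 B D ∘ f) (a ∘ g) = hzero X B).
          { apply (kernel_monic Km). rewrite Hf, comp_zero_r. reflexivity. }
          rewrite hadd_comm in H0. apply hneg_unique in H0. rewrite H0. apply comp_neg_l.
        * exact Hg.
      + intros g' Hg'. apply (kernel_monic (conj Kx0 Kxu)). rewrite Hg, <- Hg', comp_assoc, pr2_tup.
        reflexivity. }
  pose proof (K1 Wk Kj) as Wj.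
  set (phi := tup (bpr1 B D) (hadd (b ∘ bpr1 B D) (bpr2 B D))).
  set (phi' := tup (bpr1 B D) (hadd (hneg (b ∘ bpr1 B D)) (bpr2 B D))).
  assert (Hpp : phi' ∘ phi = idm _).
  { apply bsum_ext; rewrite comp_assoc; unfold phi'; rewrite ?pr1_tup, ?pr2_tup; unfold phi.
    - rewrite pr1_tup, comp_id_r. reflexivity.
    - rewrite comp_add_l, comp_neg_l, <- comp_assoc, pr1_tup, pr2_tup, comp_id_r,
        hadd_assoc, hadd_negl, hadd_0l. reflexivity. }
  assert (Hpp' : phi ∘ phi' = idm _).
  { apply bsum_ext; rewrite comp_assoc; unfold phi; rewrite ?pr1_tup, ?pr2_tup; unfold phi'.
    - rewrite pr1_tup, comp_id_r. reflexivity.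
    - rewrite comp_add_l, <- comp_assoc, pr1_tup, pr2_tup, comp_id_r,
        hadd_assoc, hadd_neg, hadd_0l. reflexivity. }
  assert (Wi1 : W _ _ _ (tup (hneg a) (hzero A D)) (cotup m n ∘ phi')).
  { apply (Hiso _ _ _ _ _ _ _ _ _ _ (idm A) phi (idm P) Wj).
    - apply iso_id.
    - exists phi'. split; assumption.
    - apply iso_id.
    - rewrite comp_id_r. unfold phi. rewrite tup_comp. apply bsum_ext; rewrite ?pr1_tup, ?pr2_tup.
      + reflexivity.
      + rewrite comp_add_l, <- comp_assoc, pr1_tup, pr2_tup, comp_neg_r. unfold x.
        rewrite hadd_negl. reflexivity.
    - rewrite <- comp_assoc, Hpp, comp_id_r, comp_id_l. reflexivity. }
  set (d2 := tup (c ∘ bpr1 B D) (bpr2 B D)).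
  assert (d2_in1 : d2 ∘ bin1 B D = bin1 Q D ∘ c).
  { unfold d2. rewrite tup_comp, in1_tup, <- comp_assoc, bpr1_in1, bpr2_in1, comp_id_r.
    reflexivity. }
  assert (d2_in2 : d2 ∘ bin2 B D = bin2 Q D).
  { unfold d2. rewrite tup_comp, <- comp_assoc, bpr1_in2, bpr2_in2, comp_zero_r.
    apply bsum_ext; rewrite ?pr1_tup, ?pr2_tup.
    - rewrite bpr1_in2. reflexivity.
    - rewrite bpr2_in2. reflexivity. }
  pose proof Cc as [Cc0 Ccu].
  assert (Cd2 : is_cokernel_of (tup (hneg a) (hzero A D)) d2).
  { split.
    - unfold d2. rewrite tup_comp, <- comp_assoc, pr1_tup, pr2_tup, comp_neg_r, Cc0,
        hneg_zero. apply tup_zero.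
    - intros X f Hf.
      rewrite (cotup_eta f), cotup_tup, comp_zero_r, hadd_0, comp_neg_r in Hf.
      assert (Hf' : (f ∘ bin1 B D) ∘ a = hzero A X).
      { rewrite <- (hneg_neg (_ ∘ a)), Hf. apply hneg_zero. }
      destruct (Ccu X _ Hf') as [g [Hg Hgu]].
      exists (cotup g (f ∘ bin2 B D)). split.
      + apply bsum_ext_l; rewrite <- comp_assoc.
        * rewrite d2_in1, comp_assoc, cotup_in1. exact Hg.
        * rewrite d2_in2, cotup_in2. reflexivity.
      + intros G HG. apply bsum_ext_l.
        * rewrite cotup_in1. apply Hgu. rewrite <- HG, <- (comp_assoc G d2), d2_in1, comp_assoc.
          reflexivity.
        * rewrite cotup_in2, <- HG, <- comp_assoc, d2_in2. reflexivity. }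
  pose proof (K2 Wi1 Cd2) as Wd2.
  assert (Pb2 : is_pullback d2 (bin1 Q D) c (bin1 B D)).
  { split; [exact d2_in1|].
    intros Z u v Huv.
    assert (H1 := f_equal (fun h => bpr1 Q D ∘ h) Huv).
    assert (H2 := f_equal (fun h => bpr2 Q D ∘ h) Huv). simpl in H1, H2.
    unfold d2 in H1, H2.
    rewrite !comp_assoc, pr1_tup, bpr1_in1, comp_id_l, <- comp_assoc in H1.
    rewrite !comp_assoc, pr2_tup, bpr2_in1, comp_zero_l in H2.
    exists (bpr1 B D ∘ u). split; [split|].
    - apply bsum_ext; rewrite comp_assoc.
      + rewrite bpr1_in1, comp_id_l. reflexivity.
      + rewrite bpr2_in1, comp_zero_l, H2. reflexivity.
    - exact H1.
    - intros w' [Hw1 Hw2]. rewrite <- Hw1, comp_assoc, bpr1_in1, comp_id_l. reflexivity. }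
  destruct (E2op _ _ _ d2 (bin1 Q D) (ex_intro _ _ (ex_intro _ _ Wd2))) as [_ Hpb2].
  destruct (Hpb2 _ _ _ Pb2) as [K' [k' Wk']].
  destruct (W_kc Wd2) as [Kd2 _].
  assert (Ka : is_kernel_of a c).
  { split; [exact Cc0|].
    intros X f Hf.
    destruct Kd2 as [_ Kd2u].
    destruct (Kd2u X (bin1 B D ∘ f)) as [g [Hg _]].
    { rewrite comp_assoc, d2_in1, <- comp_assoc, Hf. apply comp_zero_r. }
    assert (Hag : a ∘ hneg g = f).
    { assert (H1 := f_equal (fun h => bpr1 B D ∘ h) Hg). simpl in H1.
      rewrite !comp_assoc, pr1_tup, bpr1_in1, comp_id_l, comp_neg_l in H1.
      rewrite comp_neg_r. exact H1. }
    exists (hneg g). split; [exact Hag|].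
    intros g' Hg'. apply (kernel_monic Kx). unfold x.
    rewrite <- !comp_assoc, Hg', Hag. reflexivity. }
  exists Q, c. apply (K1 Wk' Ka).
Qed.


Lemma right_part : right_weakly_exact (adm_monic W).
Proof.
  pose proof we as [Hkc [Hiso [Hsum [E0 [E0op [E2 E2op]]]]]].
  split; [|split; [|split; [|split; [|split]]]].
  - intros A B f [D [d Wd]]. exists D, d. apply (proj1 (Hkc _ _ _ _ _ Wd)).
  - intros X Y X' Y' f f' a b [D [d Wd]] Ha [b' [Hb1 Hb2]] Heq.
    exists D, (d ∘ b').
    apply (Hiso _ _ _ _ _ _ f d f' (d ∘ b') a b (idm D) Wd Ha
             (ex_intro _ b' (conj Hb1 Hb2)) iso_id Heq).
    rewrite <- comp_assoc, Hb1, comp_id_r, comp_id_l. reflexivity.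
  - intro X. split; [apply E0|].
    destruct (E0op X) as [A [i Wi]].
    exists X, (idm X). apply (K1 Wi).
    split.
    + rewrite comp_id_l. reflexivity.
    + intros Y f Hf. exists (hzero Y zobj). split.
      * rewrite comp_id_l in Hf. unfold from_zero. rewrite comp_zero_r, Hf. reflexivity.
      * intros g' _. rewrite <- (comp_id_l g'), zobj_id. apply comp_zero_l.
  - exact E2.
  - intros A B D a b H1 H2. exact (Q_prop a b H1 H2).
  - intros A B A' B' f g [D [d Wd]] [D' [d' Wd']].
    exists (bsum D D'), (hsum d d'). apply Hsum; assumption.
Qed.

Lemma W_char {A B D : C} (i : Hom A B) (d : Hom B D) :
  W _ _ _ i d <-> (kc_pair i d /\ adm_monic W i /\ adm_epic W d).
Proof.
  split.
  - intro Wd. split; [exact (W_kc Wd)|]. split; [exists D, d | exists A, i]; exact Wd.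
  - intros [[_ Cd] [[D' [e We]] _]]. exact (K2 We Cd).
Qed.

End Right.

Section Dual.
Variable C : AdditiveCategory.

Definition Cop : AdditiveCategory :=
  {| Obj := Obj C;
     Hom := fun A B => @Hom C B A;
     idm := @idm C;
     comp := fun A B D g f => @comp C D B A f g;
     comp_assoc := fun A B D E h g f => eq_sym (@comp_assoc C E D B A f g h);
     comp_id_l := fun A B f => @comp_id_r C B A f;
     comp_id_r := fun A B f => @comp_id_l C B A f;
     hadd := fun A B => @hadd C B A;
     hzero := fun A B => @hzero C B A;
     hneg := fun A B => @hneg C B A;
     hadd_assoc := fun A B => @hadd_assoc C B A;
     hadd_comm := fun A B => @hadd_comm C B A;
     hadd_0 := fun A B => @hadd_0 C B A;
     hadd_neg := fun A B => @hadd_neg C B A;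
     comp_add_l := fun A B D g g' f => @comp_add_r C D B A f g g';
     comp_add_r := fun A B D g f f' => @comp_add_l C D B A f f' g;
     zobj := @zobj C;
     zobj_id := @zobj_id C;
     bsum := @bsum C;
     bin1 := @bpr1 C;
     bin2 := @bpr2 C;
     bpr1 := @bin1 C;
     bpr2 := @bin2 C;
     bpr1_in1 := @bpr1_in1 C;
     bpr2_in2 := @bpr2_in2 C;
     bpr1_in2 := @bpr2_in1 C;
     bpr2_in1 := @bpr1_in2 C;
     bsum_id := @bsum_id C |}.

Lemma hsum_op_eq {A B A' B' : C} (f : @Hom C A B) (g : @Hom C A' B') :
  @hsum Cop B A B' A' f g = @hsum C A B A' B' f g.
Proof. unfold hsum. simpl. rewrite !comp_assoc. reflexivity. Qed.

Lemma sq_inv {X Y X' Y' : C} (f : Hom X Y) (f' : Hom X' Y') (a : Hom X X') (b : Hom Y Y')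
  (a' : Hom X' X) (b' : Hom Y' Y) :
  f' ∘ a = b ∘ f -> a ∘ a' = idm X' -> b' ∘ b = idm Y -> b' ∘ f' = f ∘ a'.
Proof.
  intros H Ha Hb.
  rewrite <- (comp_id_r (b' ∘ f')), <- Ha, !comp_assoc, <- (comp_assoc b' f' a), H,
    comp_assoc, Hb, comp_id_l. reflexivity.
Qed.

Lemma pb_sym {P A B D : C} (h : Hom A D) (t : Hom B D) (h' : Hom P B) (t' : Hom P A) :
  is_pullback h t h' t' -> is_pullback t h t' h'.
Proof.
  intros [H1 H2]. split; [symmetry; exact H1|].
  intros Z u v Huv. destruct (H2 Z v u (eq_sym Huv)) as [w [[Hw1 Hw2] Hu]].
  exists w. split; [split; assumption|]. intros w' [E1 E2]. apply Hu. split; assumption.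
Qed.

Lemma po_sym {X Y X' Y' : C} (f : Hom X Y) (h : Hom X X') (f' : Hom X' Y') (h' : Hom Y Y') :
  is_pushout f h f' h' -> is_pushout h f h' f'.
Proof.
  intros [H1 H2]. split; [symmetry; exact H1|].
  intros Z u v Huv. destruct (H2 Z v u (eq_sym Huv)) as [w [[Hw1 Hw2] Hu]].
  exists w. split; [split; assumption|]. intros w' [E1 E2]. apply Hu. split; assumption.
Qed.

Variable W : SeqClass C.
Definition Wop : SeqClass Cop := fun A B D i d => W D B A d i.

Lemma we_op : weakly_exact W -> weakly_exact Wop.
Proof.
  intros [Hkc [Hiso [Hsum [E0 [E0op [E2 E2op]]]]]].
  split; [|split; [|split; [|split; [|split; [|split]]]]].
  - intros A B D i d Hw. destruct (Hkc _ _ _ d i Hw) as [K Co]. split; [exact Co | exact K].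
  - intros A B D A' B' D' i d i' d' a b c Hw [a' [Ha1 Ha2]] [b' [Hb1 Hb2]] [c' [Hc1 Hc2]] E1 E2'.
    simpl in *. unfold Wop in *.
    apply (Hiso _ _ _ _ _ _ d i d' i' c' b' a' Hw).
    + exists c. split; assumption.
    + exists b. split; assumption.
    + exists a. split; assumption.
    + symmetry. apply (sq_inv d' d c b c' b'); [symmetry; exact E2' | exact Hc1 | exact Hb2].
    + symmetry. apply (sq_inv i' i b a b' a'); [symmetry; exact E1 | exact Hb1 | exact Ha2].
  - intros A B D A' B' D' i d i' d' H1 H2. unfold Wop in *.
    rewrite !hsum_op_eq. apply Hsum; assumption.
  - exact E0op.
  - exact E0.
  - intros X Y X' f h Hf.
    destruct (E2op _ _ _ f h Hf) as [[Q [h' [t' Pb]]] Hst]. split.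
    + exists Q, h', t'. apply pb_sym; exact Pb.
    + intros Y' f' h2 Po. apply (Hst _ f' h2). apply pb_sym. exact Po.
  - intros A D B h t Hh.
    destruct (E2 _ _ _ h t Hh) as [[Y' [f' [h' Po]]] Hst]. split.
    + exists Y', f', h'. apply po_sym; exact Po.
    + intros Q h0 t0 Pb. apply (Hst _ h0 t0). apply po_sym. exact Pb.
Qed.

Lemma rwe_lwe : weakly_exact W -> right_weakly_exact (adm_monic Wop) ->
  left_weakly_exact (adm_epic W).
Proof.
  intros [Hkc [Hiso [Hsum [E0 [E0op [E2 E2op]]]]]] [R1 [R2 [R3 [R4 [R5 R6]]]]].
  split; [|split; [|split; [|split; [|split]]]].
  - intros A B f H. exact (R1 B A f H).
  - intros X Y X' Y' f f' a b Hf [a' [Ha1 Ha2]] [b' [Hb1 Hb2]] E.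
    apply (R2 Y X Y' X' f f' b' a' Hf).
    + exists b. split; assumption.
    + exists a. split; assumption.
    + simpl. apply (sq_inv f f' a b a' b' E Ha2 Hb1).
  - intro X. split; [exact (E0op X) | exact (proj2 (R3 X))].
  - exact E2op.
  - intros A B D a b H1 H2. exact (R5 D B A b a H1 H2).
  - intros A B A' B' f g H1 H2. pose proof (R6 B A B' A' f g H1 H2) as H.
    rewrite hsum_op_eq in H. exact H.
Qed.

End Dual.

Theorem mainTheorem6 (C : AdditiveCategory) (W : SeqClass C) :
  weakly_exact W ->
  right_weakly_exact (adm_monic W) /\
  left_weakly_exact (adm_epic W) /\
  (forall (A B D : C) (i : Hom A B) (d : Hom B D),
      W A B D i d <-> (kc_pair i d /\ adm_monic W i /\ adm_epic W d)).
Proof.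
  intro we. split; [|split].
  - exact (right_part C W we).
  - apply (rwe_lwe C W we). apply (right_part (Cop C) (Wop C W) (we_op C W we)).
  - intros A B D i d. exact (W_char C W we i d).
Qed.
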